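(* Let $G_6$ be the graph on vertex set $[6]$ with edges $(1,2),(1,3),(1,4),(1,6),(2,3),(2,4),(2,5),(3,4),(3,5),(4,5),(5,6)$ (a subdivision of $K_5$). Then the abelian group $H_1(G_6;\mathbb Z)$ contains an element of order $2$.
   Context: Let $G$ be a simple graph with vertex set $[n]$; an edge $\{i,j\}$ with $i<j$ is written $(i,j)$, and $E(G)$ is totally ordered lexicographically. For $F\subseteq E(G)$ let $\beta(F)$ be the partition of $[n]$ into the vertex sets of the connected components of $([n],F)$, and $\mathfrak S_{\beta(F)}\subseteq\mathfrak S_n$ the subgroup of permutations mapping each block to itself. For a commutative ring $R$ let $a_F=\sum_{\sigma\in\mathfrak S_{\beta(F)}}\sigma\in R[\mathfrak S_n]$ and $\mathcal M_F=R[\mathfrak S_n]a_F$; for $e\in F$, $\mathcal M_F\subseteq\mathcal M_{F\setminus e}$. The chain complex is $C_i(G;R)=\bigoplus_{|F|=i}\mathcal M_F$ with $d_i(x)=\sum_{e\in F}(-1)^{|\{f\in F: f<e\}|}\iota_{F,F\setminus e}(x)$ for $x\in\mathcal M_F$, $\iota$ the inclusion into the summand $\mathcal M_{F\setminus e}$; $H_i(G;R)=\ker d_i/\operatorname{im}d_{i+1}$ (the $q$-degree zero chromatic symmetric homology). *)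

(* Defs.v *)
From HB Require Import structures.
From mathcomp Require Import all_boot all_order all_algebra all_fingroup.
Set Implicit Arguments. Unset Strict Implicit. Unset Printing Implicit Defensive.
Import GRing.Theory.
Local Open Scope ring_scope.

(* Vertices [n] = {1,...,n} are represented by 'I_n (vertex k <-> ordinal k-1).
   A graph is given by its edge list E : seq (nat * nat) of pairs (i,j), i<j,
   written with the paper's 1-based labels and listed in lexicographic order;
   edge number e : 'I_(size E) is nth (0,0) E e, and the total order on E(G)
   is the order of the indices. *)

(* The group ring Z[S_n]: integer-valued functions on permutations. *)
Definition ZS (n : nat) := {ffun {perm 'I_n} -> int}.

Definition gmul (n : nat) (x y : ZS n) : ZS n :=
  [ffun s => \sum_(t : {perm 'I_n}) x t * y (t^-1 * s)%g].

Definition edge_at (E : seq (nat * nat)) (e : 'I_(size E)) := nth (0%N, 0%N) E e.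

Definition adjF (n : nat) (E : seq (nat * nat)) (F : {set 'I_(size E)}) : rel 'I_n :=
  fun u v => [exists e in F, (edge_at e == (u.+1, v.+1)) || (edge_at e == (v.+1, u.+1))].

(* S_{beta(F)}: permutations mapping each connected component of ([n],F) to itself *)
Definition Sbeta (n : nat) (E : seq (nat * nat)) (F : {set 'I_(size E)}) : {set {perm 'I_n}} :=
  [set s : {perm 'I_n} | [forall v, connect (@adjF n E F) v (s v)]].

Definition aF (n : nat) (E : seq (nat * nat)) (F : {set 'I_(size E)}) : ZS n :=
  [ffun s => if s \in @Sbeta n E F then 1 else 0].

Definition inM (n : nat) (E : seq (nat * nat)) (F : {set 'I_(size E)}) (x : ZS n) : Prop :=
  exists y : ZS n, x = @gmul n y (@aF n E F).

Definition chain (n : nat) (E : seq (nat * nat)) := {ffun {set 'I_(size E)} -> ZS n}.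

Definition inC (n : nat) (E : seq (nat * nat)) (i : nat) (c : chain n E) : Prop :=
  (forall F : {set 'I_(size E)}, #|F| != i -> c F = 0) /\ (forall F : {set 'I_(size E)}, @inM n E F (c F)).

(* The differential: the component at G of d(c) is
   sum over e not in G of (-1)^{#{f in G | f < e}} c(G u {e}),
   i.e. d(x) = sum_{e in F} (-1)^{#{f in F : f < e}} iota_{F,F\e}(x). *)
Definition dchain (n : nat) (E : seq (nat * nat)) (c : chain n E) : chain n E :=
  [ffun G : {set 'I_(size E)} => \sum_(e : 'I_(size E) | e \notin G)
               c (e |: G) *~ ((-1) ^+ #|[set f in G | (f < e)%N]|)].

Definition is_cycle (n : nat) (E : seq (nat * nat)) (i : nat) (c : chain n E) : Prop :=
  @inC n E i c /\ @dchain n E c = 0.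

Definition is_boundary (n : nat) (E : seq (nat * nat)) (i : nat) (c : chain n E) : Prop :=
  exists b : chain n E, @inC n E i.+1 b /\ c = @dchain n E b.

Definition H_has_order2 (n : nat) (E : seq (nat * nat)) (i : nat) : Prop :=
  exists c : chain n E, @is_cycle n E i c /\ ~ @is_boundary n E i c /\ @is_boundary n E i (c *+ 2).

Definition G6_edges : seq (nat * nat) :=
  [:: (1,2); (1,3); (1,4); (1,6); (2,3); (2,4); (2,5); (3,4); (3,5); (4,5); (5,6)]%N.

(* Main.v *)
From HB Require Import structures.
Require Import Defs.
From mathcomp Require Import all_boot all_order all_algebra all_fingroup.
Set Implicit Arguments. Unset Strict Implicit. Unset Printing Implicit Defensive.
Import GRing.Theory.
Local Open Scope ring_scope.

Definition cdat (i : nat) : seq (seq nat * int) :=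
  match i with
  | 0 => [:: ([:: 0; 1; 2; 3; 4; 5], Posz 1);
    ([:: 2; 0; 1; 3; 4; 5], Posz 1);
    ([:: 3; 2; 1; 0; 4; 5], Posz 1);
    ([:: 1; 3; 2; 0; 4; 5], Posz 1)]
  | 1 => [:: ([:: 1; 0; 2; 3; 4; 5], Negz 0);
    ([:: 2; 3; 1; 0; 4; 5], Negz 0)]
  | 2 => [:: ([:: 0; 2; 1; 3; 4; 5], Negz 0);
    ([:: 3; 1; 2; 0; 4; 5], Negz 0)]
  | _ => [::] end%N.
Definition bdat (i j : nat) : seq (seq nat * int) :=
  match i, j with
  | 0, 1 => [:: ([:: 2; 3; 4; 1; 5; 0], Posz 1);
    ([:: 1; 2; 4; 3; 5; 0], Negz 0);
    ([:: 1; 2; 3; 4; 5; 0], Negz 0);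
    ([:: 2; 3; 4; 1; 0; 5], Posz 1);
    ([:: 2; 3; 4; 0; 1; 5], Negz 0);
    ([:: 1; 3; 4; 0; 2; 5], Negz 0);
    ([:: 1; 2; 4; 0; 3; 5], Negz 0);
    ([:: 1; 2; 3; 0; 4; 5], Negz 1);
    ([:: 0; 2; 4; 3; 1; 5], Posz 1);
    ([:: 0; 2; 3; 4; 1; 5], Posz 1);
    ([:: 0; 2; 4; 1; 3; 5], Negz 0);
    ([:: 0; 2; 3; 1; 4; 5], Negz 0);
    ([:: 0; 1; 4; 3; 2; 5], Posz 1);
    ([:: 0; 1; 3; 4; 2; 5], Posz 1);
    ([:: 0; 1; 4; 2; 3; 5], Negz 0);
    ([:: 0; 1; 3; 2; 4; 5], Negz 0);
    ([:: 0; 1; 2; 3; 4; 5], Negz 0)]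
  | 0, 2 => [:: ([:: 1; 3; 2; 4; 5; 0], Posz 1);
    ([:: 1; 3; 0; 4; 2; 5], Negz 0);
    ([:: 1; 2; 0; 3; 4; 5], Posz 1);
    ([:: 0; 1; 3; 2; 4; 5], Posz 2);
    ([:: 2; 3; 1; 4; 0; 5], Negz 0);
    ([:: 0; 1; 4; 2; 3; 5], Posz 1);
    ([:: 2; 3; 0; 4; 1; 5], Negz 0)]
  | 0, 3 => [:: ([:: 1; 3; 2; 0; 5; 4], Negz 0);
    ([:: 2; 3; 1; 0; 5; 4], Negz 0)]
  | 0, 5 => [:: ([:: 0; 3; 2; 4; 1; 5], Negz 0);
    ([:: 0; 3; 1; 4; 2; 5], Negz 0);
    ([:: 1; 3; 0; 4; 2; 5], Negz 0);
    ([:: 1; 2; 4; 3; 5; 0], Posz 1);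
    ([:: 1; 3; 2; 4; 5; 0], Posz 1);
    ([:: 2; 3; 1; 4; 5; 0], Posz 1);
    ([:: 1; 2; 3; 4; 5; 0], Posz 1);
    ([:: 2; 3; 0; 4; 1; 5], Negz 0)]
  | 0, 6 => [:: ([:: 2; 3; 0; 1; 4; 5], Posz 1);
    ([:: 1; 2; 0; 3; 4; 5], Negz 0);
    ([:: 0; 3; 1; 2; 4; 5], Posz 1);
    ([:: 0; 3; 2; 1; 4; 5], Posz 1);
    ([:: 1; 3; 0; 2; 4; 5], Posz 1);
    ([:: 1; 2; 3; 0; 4; 5], Negz 0)]
  | 0, 7 => [:: ([:: 1; 2; 0; 3; 4; 5], Posz 1);
    ([:: 1; 4; 0; 3; 2; 5], Posz 2);
    ([:: 1; 3; 0; 4; 2; 5], Posz 2);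
    ([:: 2; 4; 0; 3; 1; 5], Posz 2);
    ([:: 2; 3; 0; 4; 1; 5], Posz 2);
    ([:: 1; 3; 2; 4; 5; 0], Negz 0);
    ([:: 1; 4; 2; 3; 5; 0], Negz 0);
    ([:: 3; 4; 1; 2; 5; 0], Negz 0);
    ([:: 2; 4; 1; 3; 5; 0], Negz 0);
    ([:: 2; 3; 1; 4; 5; 0], Negz 0);
    ([:: 3; 4; 0; 1; 2; 5], Posz 1);
    ([:: 3; 4; 0; 2; 1; 5], Posz 1)]
  | 0, 8 => [:: ([:: 0; 2; 1; 3; 4; 5], Negz 0);
    ([:: 0; 1; 2; 3; 4; 5], Negz 0);
    ([:: 1; 3; 2; 0; 4; 5], Negz 0);
    ([:: 2; 3; 1; 0; 4; 5], Negz 0)]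
  | 0, 9 => [:: ([:: 2; 3; 0; 1; 4; 5], Negz 0);
    ([:: 0; 2; 3; 1; 4; 5], Negz 0);
    ([:: 1; 3; 0; 2; 4; 5], Negz 0);
    ([:: 0; 1; 3; 2; 4; 5], Negz 0)]
  | 0, 10 => [:: ([:: 3; 4; 2; 0; 1; 5], Posz 1);
    ([:: 3; 4; 1; 0; 2; 5], Posz 1);
    ([:: 1; 4; 2; 0; 3; 5], Posz 1);
    ([:: 2; 4; 1; 0; 3; 5], Posz 1);
    ([:: 2; 4; 1; 3; 0; 5], Posz 1);
    ([:: 2; 3; 4; 1; 0; 5], Negz 0);
    ([:: 3; 4; 2; 1; 0; 5], Negz 1);
    ([:: 2; 4; 3; 1; 0; 5], Negz 0);
    ([:: 2; 3; 1; 4; 0; 5], Posz 1);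
    ([:: 1; 3; 2; 0; 4; 5], Posz 1);
    ([:: 2; 3; 1; 0; 4; 5], Posz 1)]
  | 1, 2 => [:: ([:: 0; 4; 1; 3; 2; 5], Posz 1);
    ([:: 0; 1; 3; 4; 2; 5], Posz 1);
    ([:: 0; 3; 1; 4; 2; 5], Posz 1);
    ([:: 0; 1; 2; 3; 4; 5], Negz 0);
    ([:: 0; 2; 1; 3; 4; 5], Negz 0);
    ([:: 1; 2; 3; 4; 5; 0], Posz 1);
    ([:: 1; 4; 2; 3; 0; 5], Posz 1);
    ([:: 1; 2; 3; 4; 0; 5], Posz 1);
    ([:: 1; 3; 2; 4; 0; 5], Posz 1);
    ([:: 0; 4; 2; 3; 1; 5], Posz 1);
    ([:: 0; 2; 3; 4; 1; 5], Posz 1);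
    ([:: 0; 3; 2; 4; 1; 5], Posz 1)]
  | 1, 3 => [:: ([:: 1; 4; 2; 0; 5; 3], Posz 1);
    ([:: 1; 3; 2; 0; 5; 4], Posz 1)]
  | 1, 5 => [:: ([:: 2; 0; 4; 3; 1; 5], Posz 1);
    ([:: 2; 0; 3; 4; 1; 5], Posz 1);
    ([:: 1; 0; 2; 3; 4; 5], Posz 1);
    ([:: 1; 0; 4; 3; 2; 5], Posz 1);
    ([:: 1; 0; 3; 4; 2; 5], Posz 1);
    ([:: 0; 3; 1; 4; 2; 5], Posz 1);
    ([:: 0; 1; 4; 3; 2; 5], Posz 1);
    ([:: 0; 1; 3; 4; 2; 5], Posz 1);
    ([:: 2; 1; 4; 3; 5; 0], Negz 0);
    ([:: 1; 3; 2; 4; 5; 0], Negz 0);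
    ([:: 1; 2; 4; 3; 5; 0], Negz 0);
    ([:: 1; 2; 3; 4; 5; 0], Negz 0);
    ([:: 2; 1; 3; 4; 5; 0], Negz 0);
    ([:: 0; 3; 2; 4; 1; 5], Posz 1);
    ([:: 0; 2; 4; 3; 1; 5], Posz 1);
    ([:: 0; 2; 3; 4; 1; 5], Posz 1)]
  | 1, 6 => [:: ([:: 2; 1; 4; 0; 3; 5], Negz 0);
    ([:: 0; 3; 2; 1; 4; 5], Negz 0);
    ([:: 0; 2; 4; 1; 3; 5], Negz 0);
    ([:: 0; 2; 3; 1; 4; 5], Negz 0);
    ([:: 0; 1; 4; 3; 2; 5], Posz 1);
    ([:: 2; 1; 3; 0; 4; 5], Negz 0);
    ([:: 1; 2; 3; 0; 4; 5], Negz 0);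
    ([:: 2; 0; 4; 1; 3; 5], Negz 0);
    ([:: 1; 0; 4; 2; 3; 5], Negz 0);
    ([:: 1; 0; 3; 2; 4; 5], Negz 0);
    ([:: 1; 2; 4; 0; 3; 5], Negz 0);
    ([:: 2; 0; 3; 1; 4; 5], Negz 0);
    ([:: 0; 3; 1; 2; 4; 5], Negz 0);
    ([:: 0; 1; 4; 2; 3; 5], Negz 0);
    ([:: 0; 1; 3; 2; 4; 5], Negz 0)]
  | 1, 7 => [:: ([:: 0; 1; 3; 4; 2; 5], Negz 1);
    ([:: 0; 2; 3; 4; 1; 5], Negz 1);
    ([:: 1; 4; 2; 3; 5; 0], Posz 1);
    ([:: 1; 3; 2; 4; 5; 0], Posz 1);
    ([:: 0; 4; 1; 3; 2; 5], Negz 0);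
    ([:: 0; 3; 1; 4; 2; 5], Negz 0);
    ([:: 0; 4; 2; 3; 1; 5], Negz 0);
    ([:: 0; 3; 2; 4; 1; 5], Negz 0)]
  | 1, 9 => [:: ([:: 0; 2; 3; 1; 4; 5], Posz 1);
    ([:: 0; 1; 3; 2; 4; 5], Posz 1)]
  | 1, 10 => [:: ([:: 2; 4; 3; 0; 1; 5], Negz 0);
    ([:: 2; 3; 4; 0; 1; 5], Negz 0);
    ([:: 1; 3; 4; 0; 2; 5], Negz 0);
    ([:: 1; 4; 3; 0; 2; 5], Negz 0);
    ([:: 1; 4; 2; 0; 3; 5], Negz 0);
    ([:: 1; 4; 2; 3; 0; 5], Negz 0);
    ([:: 1; 2; 4; 3; 0; 5], Negz 0);
    ([:: 2; 3; 4; 1; 0; 5], Posz 1);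
    ([:: 2; 4; 3; 1; 0; 5], Posz 1);
    ([:: 1; 3; 2; 4; 0; 5], Negz 0);
    ([:: 1; 2; 3; 4; 0; 5], Negz 0);
    ([:: 1; 3; 2; 0; 4; 5], Negz 0)]
  | 2, 3 => [:: ([:: 0; 2; 1; 3; 5; 4], Posz 1);
    ([:: 0; 1; 2; 3; 5; 4], Posz 1)]
  | 2, 4 => [:: ([:: 1; 0; 3; 2; 4; 5], Posz 1)]
  | 2, 6 => [:: ([:: 0; 2; 1; 3; 4; 5], Posz 1);
    ([:: 0; 2; 3; 1; 4; 5], Posz 1);
    ([:: 0; 2; 1; 4; 3; 5], Posz 1);
    ([:: 0; 2; 4; 1; 3; 5], Posz 1);
    ([:: 1; 0; 4; 2; 3; 5], Posz 1);
    ([:: 1; 0; 3; 2; 4; 5], Posz 1);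
    ([:: 0; 1; 4; 2; 3; 5], Posz 1);
    ([:: 0; 1; 3; 2; 4; 5], Posz 1);
    ([:: 0; 1; 2; 3; 4; 5], Posz 1);
    ([:: 0; 1; 2; 4; 3; 5], Posz 1);
    ([:: 0; 1; 3; 4; 2; 5], Posz 1)]
  | 2, 8 => [:: ([:: 0; 2; 1; 3; 4; 5], Posz 1);
    ([:: 0; 1; 2; 3; 4; 5], Posz 1)]
  | 2, 10 => [:: ([:: 0; 2; 1; 4; 3; 5], Negz 0);
    ([:: 0; 1; 2; 4; 3; 5], Negz 0);
    ([:: 1; 4; 2; 3; 0; 5], Posz 1);
    ([:: 1; 2; 4; 3; 0; 5], Posz 1);
    ([:: 1; 3; 2; 4; 0; 5], Posz 1);
    ([:: 1; 2; 3; 4; 0; 5], Posz 1);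
    ([:: 0; 2; 1; 3; 4; 5], Negz 0);
    ([:: 0; 1; 2; 3; 4; 5], Negz 0)]
  | 3, 4 => [:: ([:: 1; 0; 3; 4; 5; 2], Negz 0)]
  | 3, 5 => [:: ([:: 1; 0; 3; 4; 5; 2], Posz 1);
    ([:: 0; 1; 4; 2; 5; 3], Negz 0);
    ([:: 0; 1; 3; 2; 5; 4], Negz 0)]
  | 3, 7 => [:: ([:: 1; 3; 0; 4; 5; 2], Posz 1);
    ([:: 0; 2; 1; 4; 5; 3], Posz 1);
    ([:: 0; 2; 1; 3; 5; 4], Posz 1);
    ([:: 0; 1; 2; 4; 5; 3], Posz 1);
    ([:: 0; 1; 2; 3; 5; 4], Posz 1)]
  | 4, 9 => [:: ([:: 2; 0; 3; 1; 4; 5], Posz 1);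
    ([:: 1; 0; 3; 2; 4; 5], Posz 1)]
  | 4, 10 => [:: ([:: 2; 0; 3; 4; 1; 5], Negz 0);
    ([:: 1; 0; 3; 4; 2; 5], Negz 0)]
  | 5, 6 => [:: ([:: 0; 1; 4; 2; 3; 5], Posz 1);
    ([:: 0; 1; 3; 2; 4; 5], Posz 1)]
  | 5, 8 => [:: ([:: 2; 0; 1; 3; 4; 5], Posz 1);
    ([:: 1; 0; 2; 3; 4; 5], Posz 1)]
  | 5, 10 => [:: ([:: 2; 0; 3; 4; 1; 5], Posz 1);
    ([:: 1; 0; 3; 4; 2; 5], Posz 1);
    ([:: 0; 1; 4; 2; 3; 5], Negz 0);
    ([:: 0; 1; 3; 2; 4; 5], Negz 0)]
  | 6, 7 => [:: ([:: 2; 1; 0; 3; 4; 5], Negz 0);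
    ([:: 0; 1; 3; 4; 2; 5], Posz 2);
    ([:: 1; 2; 0; 3; 4; 5], Negz 0);
    ([:: 0; 2; 1; 4; 3; 5], Posz 1);
    ([:: 0; 1; 2; 4; 3; 5], Posz 1);
    ([:: 0; 2; 1; 3; 4; 5], Posz 1);
    ([:: 0; 1; 2; 3; 4; 5], Posz 1)]
  | 7, 10 => [:: ([:: 2; 3; 0; 4; 1; 5], Posz 1);
    ([:: 1; 3; 0; 4; 2; 5], Posz 1);
    ([:: 0; 2; 1; 4; 3; 5], Posz 1);
    ([:: 0; 1; 2; 4; 3; 5], Posz 1);
    ([:: 0; 2; 1; 3; 4; 5], Posz 1);
    ([:: 0; 1; 2; 3; 4; 5], Posz 1)]
  | _, _ => [::] end%N.
Definition vtab : seq (nat * nat * nat) := [:: (0, 0, 2); (3, 3, 5); (5, 3, 4); (5, 3, 5); (7, 1, 3); (7, 3, 4); (7, 3, 5); (8, 1, 4); (9, 4, 5)]%N.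

Definition pmul (a b : seq nat) : seq nat := [seq nth 0%N b (nth 0%N a i) | i <- iota 0 6].
Definition Lall : seq (seq nat) := permutations (iota 0 6).
Arguments Lall : simpl never.
Definition edM (i j : nat) : seq (nat * nat) := [:: nth (0,0)%N G6_edges i; nth (0,0)%N G6_edges j].
Definition adjM (ed : seq (nat * nat)) (u v : nat) : bool :=
  has (fun p => (p == (u.+1, v.+1)) || (p == (v.+1, u.+1))) ed.
Definition connM ed (u v : nat) : bool :=
  [|| u == v, adjM ed u v | has (fun w => adjM ed u w && adjM ed w v) (iota 0 6)].
Definition sbM ed (l : seq nat) : bool := all (fun v => connM ed v (nth 0%N l v)) (iota 0 6).
Definition GM ed (d : seq (seq nat * int)) (l : seq nat) : int :=
  foldr (fun x acc => x.2 * (if sbM ed (pmul x.1 l) then 1 else 0) + acc) 0 d.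
Definition vbit (e x y : nat) : bool := (e, minn x y, maxn x y) \in vtab.
Definition enc (s : {perm 'I_6}) : seq nat := [seq nat_of_ord (s (inord i)) | i <- iota 0 6].

Lemma enc_nth s (i : 'I_6) : nth 0%N (enc s) i = s i.
Proof. by rewrite /enc (nth_map 0%N) ?size_iota // nth_iota // add0n inord_val. Qed.

Lemma size_enc s : size (enc s) = 6%N.
Proof. by rewrite size_map size_iota. Qed.

Lemma encE s : enc s = [seq nat_of_ord (s i) | i <- enum 'I_6].
Proof.
apply: (@eq_from_nth _ 0%N); first by rewrite size_enc size_map size_enum_ord.
move=> i; rewrite size_enc => lti.
rewrite (enc_nth s (Ordinal lti)) (nth_map ord0) ?size_enum_ord //.
by rewrite -[i]/(nat_of_ord (Ordinal lti)) nth_ord_enum.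
Qed.

Lemma encM s t : enc (s * t)%g = pmul (enc s) (enc t).
Proof.
apply: (@eq_from_nth _ 0%N); first by rewrite size_enc size_map size_iota.
move=> i; rewrite size_enc => lti.
rewrite (enc_nth _ (Ordinal lti)) /pmul (nth_map 0%N) ?size_iota // nth_iota // add0n.
by rewrite (enc_nth s (Ordinal lti)) (enc_nth t) permM.
Qed.

Lemma enc_inj : injective enc.
Proof.
move=> s t est; apply/permP => i; apply/val_inj.
by rewrite /= -!enc_nth est.
Qed.

Lemma enc_in s : enc s \in Lall.
Proof.
rewrite mem_permutations encE -val_enum_ord.
have -> : [seq nat_of_ord (s i) | i <- enum 'I_6] = map val (map s (enum 'I_6)) by elim: (enum 'I_6) => //= x l ->.
apply: perm_map; apply: uniq_perm; first by rewrite map_inj_uniq ?enum_uniq //; apply: perm_inj.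
  exact: enum_uniq.
move=> x; rewrite mem_enum inE; apply/mapP; exists (s^-1 x)%g; first by rewrite mem_enum.
by rewrite permKV.
Qed.

Lemma Lall_uniq : uniq Lall.
Proof. exact: permutations_uniq. Qed.

Lemma map_enc_perm : perm_eq [seq enc s | s <- enum {perm 'I_6}] Lall.
Proof.
have U : uniq [seq enc s | s <- enum {perm 'I_6}].
  by rewrite map_inj_uniq ?enum_uniq //; apply: enc_inj.
have sub : {subset [seq enc s | s <- enum {perm 'I_6}] <= Lall}.
  by move=> x /mapP [s _ ->]; apply: enc_in.
have sz : (size Lall <= size [seq enc s | s <- enum {perm 'I_6}])%N.
  rewrite size_map size_permutations ?iota_uniq // size_iota -cardE.
  by rewrite (card_Sn 6).
have [_ eqm] := uniq_min_size U sub sz.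
by apply: uniq_perm => //; apply: Lall_uniq.
Qed.

Lemma sum_enc (R : nmodType) (g : seq nat -> R) :
  \sum_(s : {perm 'I_6}) g (enc s) = \sum_(l <- Lall) g l.
Proof.
by rewrite -(perm_big _ map_enc_perm) big_map big_enum.
Qed.

Definition permL (p : seq nat) : {perm 'I_6} :=
  insubd (1%g : {perm 'I_6}) ([ffun i : 'I_6 => (inord (nth 0%N p i) : 'I_6)]).

Lemma permLE p (i : 'I_6) : p \in Lall -> permL p i = inord (nth 0%N p i).
Proof.
rewrite mem_permutations => hp.
have sz : size p = 6%N by rewrite (perm_size hp) size_iota.
have lt : forall k, (k < 6)%N -> (nth 0%N p k < 6)%N.
  move=> k lk; have : nth 0%N p k \in iota 0 6 by rewrite -(perm_mem hp) mem_nth ?sz.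
  by rewrite mem_iota.
have up : uniq p by rewrite (perm_uniq hp) iota_uniq.
have inj : injectiveb [ffun i : 'I_6 => (inord (nth 0%N p i) : 'I_6)].
  apply/injectiveP => a b; rewrite !ffunE => /(congr1 val).
  rewrite /= !inordK ?lt // => /eqP; rewrite nth_uniq ?sz // => /eqP ab.
  exact: val_inj.
by rewrite /permL -pvalE insubdK // ffunE.
Qed.

Lemma enc_permL p : p \in Lall -> enc (permL p) = p.
Proof.
move=> hp; have hp' := hp; rewrite mem_permutations in hp'.
have sz : size p = 6%N by rewrite (perm_size hp') size_iota.
have lt : forall k, (k < 6)%N -> (nth 0%N p k < 6)%N.
  move=> k lk; have : nth 0%N p k \in iota 0 6 by rewrite -(perm_mem hp') mem_nth ?sz.
  by rewrite mem_iota.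
apply: (@eq_from_nth _ 0%N); first by rewrite size_enc sz.
move=> i; rewrite size_enc => lti.
by rewrite (enc_nth _ (Ordinal lti)) permLE //= inordK ?lt.
Qed.

Notation E6 := 'I_(size G6_edges).

Lemma adjF2 (e f : E6) (u v : 'I_6) :
  @adjF 6 G6_edges [set e; f] u v = adjM (edM e f) u v.
Proof.
rewrite /adjF /adjM /edM /edge_at /= orbF.
apply/existsP/idP => [[x /andP [/set2P [] -> ->]] | /orP [] h].
- by [].
- by rewrite orbT.
- by exists e; rewrite set21 h.
- by exists f; rewrite set22 h.
Qed.

Definition checkT : bool :=
  all (fun i => all (fun j => all (fun x => all (fun y => all (fun z =>
    connM (edM i j) x y ==> adjM (edM i j) y z ==> connM (edM i j) x z)
    (iota 0 6)) (iota 0 6)) (iota 0 6)) (iota 0 11)) (iota 0 11).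

Lemma checkT_ok : checkT.
Proof. vm_cast_no_check (erefl true). Qed.

Lemma connM_trans (i j x y z : nat) : (i < 11)%N -> (j < 11)%N -> (x < 6)%N -> (y < 6)%N -> (z < 6)%N ->
  connM (edM i j) x y -> adjM (edM i j) y z -> connM (edM i j) x z.
Proof.
move=> hi hj hx hy hz; move: checkT_ok; rewrite /checkT.
move=> /allP /(_ i); rewrite mem_iota hi => /(_ isT) /allP /(_ j); rewrite mem_iota hj => /(_ isT).
move=> /allP /(_ x); rewrite mem_iota hx => /(_ isT) /allP /(_ y); rewrite mem_iota hy => /(_ isT).
move=> /allP /(_ z); rewrite mem_iota hz => /(_ isT).
by move=> /implyP h1 H1; move: (h1 H1) => /implyP.
Qed.

Lemma connect2 (e f : E6) (u v : 'I_6) :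
  connect (@adjF 6 G6_edges [set e; f]) u v = connM (edM e f) u v.
Proof.
apply/idP/idP.
- move/connectP => [p pth ->].
  have aux : forall q (x0 : 'I_6), path (@adjF 6 G6_edges [set e; f]) x0 q ->
      connM (edM e f) u x0 -> connM (edM e f) u (last x0 q).
    elim => [|y q IH] x0 //= /andP [a qth] h.
    apply: IH => //; apply: (connM_trans _ _ _ _ _ h) => //.
    by rewrite -adjF2.
  by apply: aux => //; rewrite /connM eqxx.
- rewrite /connM => /or3P [/eqP uv | a | /hasP [w]].
  + by have -> : u = v by apply: val_inj.
  + by apply: connect1; rewrite adjF2.
  + rewrite mem_iota /= => lw /andP [a1 a2].
    apply: (connect_trans (_ : connect _ u (Ordinal lw))); apply: connect1; by rewrite adjF2.
Qed.

Lemma Sbeta2 (e f : E6) (s : {perm 'I_6}) :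
  (s \in @Sbeta 6 G6_edges [set e; f]) = sbM (edM e f) (enc s).
Proof.
rewrite /Sbeta inE /sbM; apply/forallP/allP => [H v | H v].
- rewrite mem_iota /= => lv.
  by have := H (Ordinal lv); rewrite connect2 (enc_nth s (Ordinal lv)).
- rewrite connect2 -enc_nth; apply: H.
  by rewrite mem_iota /=.
Qed.

Definition ysum (d : seq (seq nat * int)) : ZS 6 :=
  [ffun t => \sum_(x <- d) (if t == (permL x.1)^-1%g then x.2 else 0)].

Lemma gmul_ysum d (a : ZS 6) s :
  gmul (ysum d) a s = \sum_(x <- d) x.2 * a (permL x.1 * s)%g.
Proof.
rewrite /gmul ffunE.
under eq_bigr => t _ do rewrite ffunE mulr_suml.
rewrite exchange_big /=; apply: eq_bigr => x _.
rewrite (bigD1 (permL x.1)^-1%g) //= eqxx invgK big1 ?addr0 // => t /negbTE ->.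
by rewrite mul0r.
Qed.

Lemma GM_eval (e f : E6) d s : all (fun x => x.1 \in Lall) d ->
  gmul (ysum d) (@aF 6 G6_edges [set e; f]) s = GM (edM e f) d (enc s).
Proof.
rewrite gmul_ysum; elim: d => [|x d IH] /=; first by rewrite big_nil.
move=> /andP [h1 h2]; rewrite big_cons IH // ffunE Sbeta2 encM enc_permL //.
Qed.

Lemma big_foldr_seq (R : nmodType) (I : Type) (r : seq I) (P : pred I) (g : I -> R) :
  \sum_(i <- r | P i) g i = foldr (fun i acc => if P i then g i + acc else acc) 0 r.
Proof. by elim: r => [|i r IH] /=; rewrite ?big_nil ?big_cons ?IH. Qed.

Lemma sum_E6 (R : nmodType) (P : pred nat) (g : nat -> R) :
  \sum_(e : E6 | P e) g e = foldr (fun i acc => if P i then g i + acc else acc) 0 (iota 0 11).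
Proof. by rewrite -(big_mkord P g) big_foldr_seq. Qed.

Lemma intr_sum (R : pzRingType) (I : Type) (r : seq I) (P : pred I) (g : I -> int) :
  (\sum_(i <- r | P i) g i)%:~R = \sum_(i <- r | P i) (g i)%:~R :> R.
Proof.
elim: r => [|i r IH]; rewrite ?big_nil ?big_cons //.
by case: (P i); rewrite ?intrD IH.
Qed.

Definition cc_fun (F : {set E6}) : ZS 6 :=
  if [pick e : E6 | F == [set e]] is Some e then gmul (ysum (cdat e)) (@aF 6 G6_edges F) else 0.
Definition cc : chain 6 G6_edges := [ffun F => cc_fun F].

Definition bb_fun (F : {set E6}) : ZS 6 :=
  if [pick p : E6 * E6 | (p.1 < p.2)%N && (F == [set p.1; p.2])] is Some p
             then gmul (ysum (bdat p.1 p.2)) (@aF 6 G6_edges F) else 0.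
Definition bb : chain 6 G6_edges := [ffun F => bb_fun F].

Definition checkV : bool :=
  all (fun i => all (fun x => x.1 \in Lall) (cdat i)) (iota 0 11) &&
  all (fun i => all (fun j => all (fun x => x.1 \in Lall) (bdat i j)) (iota 0 11)) (iota 0 11).

Lemma checkV_ok : checkV.
Proof. vm_cast_no_check (erefl true). Qed.

Lemma validC (e : E6) : all (fun x => x.1 \in Lall) (cdat e).
Proof.
by move: checkV_ok; rewrite /checkV => /andP [/allP h _]; apply: h; rewrite mem_iota /=.
Qed.

Lemma validB (e f : E6) : all (fun x => x.1 \in Lall) (bdat e f).
Proof.
move: checkV_ok; rewrite /checkV => /andP [_ /allP h].
have h1 : nat_of_ord e \in iota 0 11 by rewrite mem_iota /=.
by move: (h _ h1) => /allP h2; apply: h2; rewrite mem_iota /=.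
Qed.

Lemma cc1 (e : E6) : cc [set e] = gmul (ysum (cdat e)) (@aF 6 G6_edges [set e; e]).
Proof.
rewrite ffunE /cc_fun setUid; case: pickP => [x /eqP /esym /set1_inj -> // | /(_ e)].
by rewrite eqxx.
Qed.

Lemma cc0 (F : {set E6}) : #|F| != 1%N -> cc F = 0.
Proof.
by rewrite ffunE /cc_fun; case: pickP => [x /eqP -> | //]; rewrite cards1.
Qed.

Lemma bb2 (e f : E6) : (e < f)%N -> bb [set e; f] = gmul (ysum (bdat e f)) (@aF 6 G6_edges [set e; f]).
Proof.
move=> ef; rewrite ffunE /bb_fun; case: pickP => [[x y] /= /andP [xy /eqP E] | /(_ (e, f))]; last by rewrite ef eqxx.
have : (x == e) && (y == f).
  have := set21 e f; have := set22 e f; rewrite E => /set2P hf /set2P he.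
  move: ef xy; case: he => ->; case: hf => ->; rewrite ?eqxx ?ltnn //.
  by move=> h1 h2; move: (ltn_trans h1 h2); rewrite ltnn.
by case/andP => /eqP -> /eqP ->; rewrite E.
Qed.

Lemma bb0 (F : {set E6}) : #|F| != 2%N -> bb F = 0.
Proof.
rewrite ffunE /bb_fun; case: pickP => [[x y] /= /andP [xy /eqP ->] | //].
rewrite cards2.
by have -> // : x != y by apply/eqP => exy; move: xy; rewrite exy ltnn.
Qed.

Lemma gmul0 (a : ZS 6) : gmul 0 a = 0.
Proof. by apply/ffunP => s; rewrite /gmul !ffunE big1 // => t _; rewrite ffunE mul0r. Qed.

Lemma card_filter1 (f e : E6) : #|[set g in [set f] | (g < e)%N]| = (f < e)%N.
Proof.
case: (boolP (f < e)%N) => h.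
  rewrite (_ : [set g in [set f] | (g < e)%N] = [set f]) ?cards1 //; apply/setP => x; rewrite !inE.
  by case: eqP => // ->; rewrite h.
rewrite (_ : [set g in [set f] | (g < e)%N] = set0) ?cards0 //; apply/setP => x; rewrite !inE.
by case: eqP => // ->; rewrite (negbTE h).
Qed.

Lemma card_big (G : {set E6}) (x e : E6) : x \in G -> e \notin G -> (1 < #|e |: G|)%N.
Proof. by move=> xG eG; rewrite cardsU1 eG add1n ltnS card_gt0; apply/set0Pn; exists x. Qed.

Definition checkB : bool :=
  all (fun l => foldr (fun i acc => if true then GM (edM i i) (cdat i) l *~ 1 + acc else acc) 0 (iota 0 11) == 0) Lall.

Lemma checkB_ok : checkB.
Proof. vm_cast_no_check (erefl true). Qed.

Lemma cc_inC : @inC 6 G6_edges 1 cc.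
Proof.
split; first exact: cc0.
move=> F; rewrite /inM ffunE /cc_fun; case: pickP => [e _ | _].
  by exists (ysum (cdat e)).
by exists 0; rewrite gmul0.
Qed.

Lemma cc_cycle : @is_cycle 6 G6_edges 1 cc.
Proof.
split; first exact: cc_inC.
apply/ffunP => G; rewrite !ffunE.
have [-> | [x xG]] := set_0Vmem G; last first.
  by rewrite big1 // => e eG; rewrite cc0 ?mul0rz // neq_ltn (card_big xG eG) orbT.
apply/ffunP => s; rewrite sum_ffunE !ffunE.
under eq_bigr => e _.
  rewrite (setU0 [set e]) (_ : [set f in set0 | _] = set0); last by apply/setP => y; rewrite !inE.
  rewrite cards0 expr0 ffunMzE cc1 GM_eval ?validC //.
over.
rewrite (eq_bigl (fun e : E6 => true)) => [|e]; last by rewrite in_set0.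
rewrite (sum_E6 xpredT (fun i => GM (edM i i) (cdat i) (enc s) *~ 1)).
by move: checkB_ok => /allP /(_ _ (enc_in s)) /eqP.
Qed.

Lemma bb_inC : @inC 6 G6_edges 2 bb.
Proof.
split; first exact: bb0.
move=> F; rewrite /inM ffunE /bb_fun; case: pickP => [p _ | _].
  by exists (ysum (bdat p.1 p.2)).
by exists 0; rewrite gmul0.
Qed.

Lemma bb_eval (e f : E6) s : e != f ->
  bb [set e; f] s = GM (edM (minn e f) (maxn e f)) (bdat (minn e f) (maxn e f)) (enc s).
Proof.
move=> nef; case: (ltngtP e f) => h.
- by rewrite bb2 // GM_eval // validB.
- by rewrite setUC bb2 // GM_eval // validB.
- by move: nef; rewrite (val_inj h) eqxx.
Qed.

Definition checkC : bool :=
  all (fun f => all (fun l =>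
    foldr (fun i acc => if i != f then
        GM (edM (minn i f) (maxn i f)) (bdat (minn i f) (maxn i f)) l *~ ((-1) ^+ (f < i)%N) + acc
      else acc) 0 (iota 0 11)
    == GM (edM f f) (cdat f) l *+ 2) Lall) (iota 0 11).

Lemma checkC_ok : checkC.
Proof. vm_cast_no_check (erefl true). Qed.

Lemma bb_bound : @dchain 6 G6_edges bb = cc *+ 2.
Proof.
apply/ffunP => G; rewrite ffunE ffunMnE.
case: (ltngtP #|G| 1) => hG.
- move: hG; rewrite ltnS leqn0 cards_eq0 => /eqP ->.
  rewrite cc0 ?cards0 // mul0rn big1 // => e _.
  by rewrite (setU0 [set e]) bb0 ?cards1 // mul0rz.
- rewrite cc0 ?mul0rn; last by rewrite neq_ltn hG orbT.
  rewrite big1 // => e eG; rewrite bb0 ?mul0rz //.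
  by rewrite cardsU1 eG add1n eqSS neq_ltn hG orbT.
- move/eqP: hG => /cards1P [f ->].
  apply/ffunP => s; rewrite sum_ffunE ffunMnE.
  under eq_bigr => e eG.
    have nef : e != f by move: eG; rewrite in_set1.
    rewrite ffunMzE card_filter1 bb_eval //.
  over.
  rewrite cc1 GM_eval ?validC //.
  rewrite (eq_bigl (fun e : E6 => nat_of_ord e != nat_of_ord f)) => [|e]; last by rewrite in_set1.
  rewrite (sum_E6 (fun i => i != nat_of_ord f)
     (fun i => GM (edM (minn i f) (maxn i f)) (bdat (minn i f) (maxn i f)) (enc s) *~ ((-1) ^+ (f < i)%N))).
  move: checkC_ok; rewrite /checkC => /allP h.
  have hf : nat_of_ord f \in iota 0 11 by rewrite mem_iota /=.
  by move: (h _ hf) => /allP /(_ _ (enc_in s)) /eqP.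
Qed.

Definition WM (e : nat) (l : seq nat) : bool := vbit e (nth 0%N l 0) (nth 0%N l 1).

Definition Phi (x : chain 6 G6_edges) : 'Z_2 :=
  \sum_(e : E6) \sum_(s : {perm 'I_6}) (x [set e] s)%:~R * (WM e (enc s))%:R.

Lemma Z2_opp (a : 'Z_2) : - a = a.
Proof. by apply/val_inj; case: a => [[|[|//]]]. Qed.

Lemma Z2_sign (y : int) k : ((y *~ ((-1) ^+ k))%:~R : 'Z_2) = y%:~R.
Proof.
rewrite -signr_odd; case: (odd k); rewrite ?expr0 ?expr1 ?mulr1z //.
by rewrite mulrN1z intrN Z2_opp.
Qed.

Lemma Z2_even n : ~~ odd n -> (n%:R : 'Z_2) = 0.
Proof.
move=> hn; rewrite -[n]odd_double_half (negbTE hn) add0n -muln2 natrM.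
by rewrite (_ : (2%:R : 'Z_2) = 0) ?mulr0 //; apply/val_inj.
Qed.

Lemma sum_count (r : seq (seq nat)) (P : pred (seq nat)) :
  \sum_(l <- r) (P l)%:R = (count P r)%:R :> 'Z_2.
Proof. by elim: r => [|x r IH]; rewrite ?big_nil ?big_cons //= IH natrD. Qed.

Lemma sum_count2 (r : seq (seq nat)) (P Q : pred (seq nat)) :
  \sum_(l <- r) ((P l)%:R + (Q l)%:R) = (count P r + count Q r)%:R :> 'Z_2.
Proof.
elim: r => [|x r IH]; rewrite ?big_nil ?big_cons //= IH !natrD.
by rewrite !addrA; congr (_ + _); rewrite -!addrA; congr (_ + _); rewrite addrC.
Qed.

Lemma big_foldr0 (R : nmodType) (I : Type) (r : seq I) (g : I -> R) :
  \sum_(i <- r) g i = foldr (fun i acc => g i + acc) 0 r.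
Proof. by elim: r => [|i r IH] /=; rewrite ?big_nil ?big_cons ?IH. Qed.

Lemma Phi_cc : Phi cc = 1.
Proof.
rewrite /Phi.
under eq_bigr => e _.
  under eq_bigr => s _ do rewrite cc1 GM_eval ?validC //.
  rewrite (sum_enc (fun l => (GM (edM e e) (cdat e) l)%:~R * (WM e l)%:R)).
  under eq_bigr => l _ do rewrite -[(WM e l)%:R]/(((WM e l)%:Z)%:~R) -intrM.
  rewrite -intr_sum big_foldr0.
over.
rewrite -intr_sum (sum_E6 xpredT (fun i => foldr (fun l acc => GM (edM i i) (cdat i) l * (WM i l)%:Z + acc) 0 Lall)).
by vm_compute.
Qed.

Definition checkD : bool :=
  all (fun i => all (fun j => (i < j)%N ==> (let SF := filter (sbM (edM i j)) Lall in
    all (fun t => ~~ odd (count (fun l => WM j (pmul t l)) SF + count (fun l => WM i (pmul t l)) SF)) Lall))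
  (iota 0 11)) (iota 0 11).

Lemma checkD_ok : checkD.
Proof. vm_cast_no_check (erefl true). Qed.

Lemma ifmul (b : bool) (X : 'Z_2) : ((if b then 1 else 0 : int)%:~R) * X = if b then X else 0.
Proof. by case: b; rewrite ?mul1r ?mul0r. Qed.

Lemma inner_zero (e f : E6) (t : {perm 'I_6}) : (e < f)%N ->
  \sum_(h : {perm 'I_6}) ((@aF 6 G6_edges [set e; f]) h)%:~R *
     ((WM f (enc (t * h)%g))%:R + (WM e (enc (t * h)%g))%:R) = 0 :> 'Z_2.
Proof.
move=> ef.
under eq_bigr => h _ do rewrite ffunE Sbeta2 encM.
rewrite (sum_enc (fun l => ((if sbM (edM e f) l then 1 else 0) : int)%:~R *
     ((WM f (pmul (enc t) l))%:R + (WM e (pmul (enc t) l))%:R) : 'Z_2)).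
under eq_bigr => l _ do rewrite ifmul.
rewrite -big_mkcond -big_filter sum_count2.
apply: Z2_even.
move: checkD_ok; rewrite /checkD => /allP h.
have he : nat_of_ord e \in iota 0 11 by rewrite mem_iota /=.
move: (h _ he) => /allP h2.
have hf : nat_of_ord f \in iota 0 11 by rewrite mem_iota /=.
move: (h2 _ hf) => /implyP /(_ ef) /allP.
by apply; apply: enc_in.
Qed.

Lemma pairQ (b : chain 6 G6_edges) (e f : E6) : @inC 6 G6_edges 2 b -> (e < f)%N ->
  \sum_(s : {perm 'I_6}) (b [set e; f] s)%:~R * (WM f (enc s))%:R +
  \sum_(s : {perm 'I_6}) (b [set f; e] s)%:~R * (WM e (enc s))%:R = 0 :> 'Z_2.
Proof.
move=> [_ hM] ef; rewrite setUC -big_split /=.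
have [y ->] := hM [set f; e].
rewrite setUC.
under eq_bigr => s _ do rewrite -mulrDr /gmul ffunE intr_sum mulr_suml.
rewrite exchange_big /= big1 // => t _.
under eq_bigr => s _ do rewrite intrM -mulrA.
rewrite -mulr_sumr (reindex_inj (mulgI t)) /=.
under eq_bigr => h _ do rewrite mulKg.
by rewrite inner_zero // mulr0.
Qed.

Lemma pair_sum (R : zmodType) (Q : E6 -> E6 -> R) :
  \sum_(f : E6) \sum_(e : E6 | e \notin [set f]) Q e f =
  \sum_(f : E6) \sum_(e : E6 | (e < f)%N) (Q e f + Q f e).
Proof.
under eq_bigr => f _ do rewrite (bigID (fun e : E6 => (e < f)%N)) /=.
rewrite big_split /=.
have -> : \sum_(f : E6) \sum_(e : E6 | (e \notin [set f]) && (e < f)%N) Q e f =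
          \sum_(f : E6) \sum_(e : E6 | (e < f)%N) Q e f.
  apply: eq_bigr => f _; apply: eq_bigl => e; rewrite in_set1.
  case: (ltngtP e f) => h; rewrite ?andbT ?andbF //.
  by apply/eqP => ef; move: h; rewrite ef ltnn.
have -> : \sum_(f : E6) \sum_(e : E6 | (e \notin [set f]) && ~~ (e < f)%N) Q e f =
          \sum_(f : E6) \sum_(e : E6 | (f < e)%N) Q e f.
  apply: eq_bigr => f _; apply: eq_bigl => e; rewrite in_set1.
  case: (ltngtP e f) => h; rewrite ?andbT ?andbF //.
    by apply/eqP => ef; move: h; rewrite ef ltnn.
  by rewrite (val_inj h) eqxx.
rewrite [X in _ + X](exchange_big_dep xpredT) //=.
by rewrite -big_split /=; apply: eq_bigr => f _; rewrite -big_split.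
Qed.

Lemma Phi_db (b : chain 6 G6_edges) : @inC 6 G6_edges 2 b -> Phi (@dchain 6 G6_edges b) = 0.
Proof.
move=> hb; rewrite /Phi.
under eq_bigr => f _.
  under eq_bigr => s _.
    rewrite ffunE sum_ffunE intr_sum mulr_suml.
    under eq_bigr => e _ do rewrite ffunMzE Z2_sign.
  over.
  rewrite exchange_big /=.
over.
rewrite pair_sum big1 // => f _; rewrite big1 // => e ef.
exact: pairQ.
Qed.

Theorem mainTheorem16 : H_has_order2 6 G6_edges 1.
Proof.
exists cc; split; first exact: cc_cycle.
split.
  move=> [b [hb eqb]]; have := Phi_db hb; rewrite -eqb Phi_cc.
  by move/eqP; rewrite oner_eq0.
by exists bb; split; [exact: bb_inC | rewrite bb_bound].
Qed.
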